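(* For any finite simple graphs $G$ and $H$, the strong product graph $G\boxtimes H$ is homotopic to the Cartesian simplex product graph $G\times H$.
   Context: For graphs $G=(V,E)$, $H=(W,F)$ the strong product $G\boxtimes H$ has vertex set $V\times W$, and distinct $(a,b),(c,d)$ are adjacent iff ($a=c$ and $\{b,d\}\in F$) or ($b=d$ and $\{a,c\}\in E$) or ($\{a,c\}\in E$ and $\{b,d\}\in F$). A simplex of a graph is the vertex set of a nonempty complete subgraph. The Cartesian simplex product $G\times H$ is the graph whose vertices are the pairs $(x,y)$ with $x$ a simplex of $G$ and $y$ a simplex of $H$, two distinct vertices $(x,y),(u,v)$ being adjacent iff ($x\subseteq u$ and $y\subseteq v$) or ($u\subseteq x$ and $v\subseteq y$). Homotopy of graphs is combinatorial (Ivashchenko/Evako style): the unit sphere $S(x)$ of a vertex $x$ is the subgraph induced by its neighbours; $K_1$ is contractible, and inductively a graph is contractible if it has a vertex $x$ such that $S(x)$ and $G\setminus x$ are contractible. A homotopy step is either removing a vertex whose unit sphere is contractible (together with its edges), or the inverse operation of adding a new vertex joined exactly to the vertices of a contractible induced subgraph. Two graphs are homotopic if they are related by a finite sequence of homotopy steps (and graph isomorphisms). *)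

(* Defs.v *)
From mathcomp Require Import all_boot.
From Stdlib Require Import Relations.Relation_Operators.
Set Implicit Arguments. Unset Strict Implicit. Unset Printing Implicit Defensive.

Record graph := Graph {
  vert : finType;
  adj : rel vert;
  adj_sym : symmetric adj;
  adj_irr : irreflexive adj }.

Section Induced.
Variables (G : graph) (A : {set vert G}).
Definition ind_vert : finType := {x : vert G | x \in A}.
Definition ind_adj : rel ind_vert := fun x y => adj (val x) (val y).
Lemma ind_adj_sym : symmetric ind_adj.
Proof. by move=> x y; rewrite /ind_adj adj_sym. Qed.
Lemma ind_adj_irr : irreflexive ind_adj.
Proof. by move=> x; rewrite /ind_adj adj_irr. Qed.
Definition induced : graph := Graph ind_adj_sym ind_adj_irr.
End Induced.

Definition nbhd (G : graph) (x : vert G) : {set vert G} := [set y | adj x y].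
Definition unit_sphere (G : graph) (x : vert G) : graph := induced (nbhd x).
Definition del_vertex (G : graph) (x : vert G) : graph := induced [set~ x].

(* Contractibility (Ivashchenko/Evako): K1 is contractible; G is contractible
   if some vertex x has S(x) and G \ x contractible. *)
Inductive contractible : graph -> Prop :=
| contr_K1 (G : graph) : #|vert G| = 1 -> contractible G
| contr_step (G : graph) (x : vert G) :
    contractible (unit_sphere x) -> contractible (del_vertex x) -> contractible G.

Section AddVertex.
Variables (G : graph) (A : {set vert G}).
Definition addv_adj : rel (option (vert G)) := fun a b =>
  match a, b with
  | Some a, Some b => adj a b
  | None, Some b => b \in A
  | Some a, None => a \in A
  | None, None => false
  end.
Lemma addv_adj_sym : symmetric addv_adj.
Proof. by case=> [a|] [b|] //=; rewrite adj_sym. Qed.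
Lemma addv_adj_irr : irreflexive addv_adj.
Proof. by case=> [a|] //=; rewrite adj_irr. Qed.
Definition add_vertex : graph := Graph addv_adj_sym addv_adj_irr.
End AddVertex.

Definition graph_iso (G H : graph) : Prop :=
  exists f : vert G -> vert H, bijective f /\ forall a b, adj (f a) (f b) = adj a b.

Inductive homotopy_step : graph -> graph -> Prop :=
| hs_remove (G : graph) (x : vert G) :
    contractible (unit_sphere x) -> homotopy_step G (del_vertex x)
| hs_add (G : graph) (A : {set vert G}) :
    contractible (induced A) -> homotopy_step G (add_vertex A)
| hs_iso (G H : graph) : graph_iso G H -> homotopy_step G H.

Definition homotopic (G H : graph) : Prop :=
  clos_refl_sym_trans graph homotopy_step G H.

Section Strong.
Variables (G H : graph).
Definition strong_adj : rel (vert G * vert H) := fun p q =>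
  (p != q) &&
  [|| (p.1 == q.1) && adj p.2 q.2,
      (p.2 == q.2) && adj p.1 q.1
    | adj p.1 q.1 && adj p.2 q.2].
Lemma strong_adj_sym : symmetric strong_adj.
Proof.
move=> p q; rewrite /strong_adj eq_sym [p.1 == _]eq_sym [p.2 == _]eq_sym.
by rewrite (adj_sym p.1) (adj_sym p.2).
Qed.
Lemma strong_adj_irr : irreflexive strong_adj.
Proof. by move=> p; rewrite /strong_adj eqxx. Qed.
Definition strong_prod : graph := Graph strong_adj_sym strong_adj_irr.
End Strong.

Definition simplex (G : graph) (A : {set vert G}) : bool :=
  (A != set0) && [forall x in A, forall y in A, (x != y) ==> adj x y].

Section SimplexProd.
Variables (G H : graph).
Definition sp_vert : finType :=
  {p : {set vert G} * {set vert H} | simplex p.1 && simplex p.2}.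
Definition sp_adj : rel sp_vert := fun p q =>
  (p != q) &&
  (((val p).1 \subset (val q).1) && ((val p).2 \subset (val q).2)
   || ((val q).1 \subset (val p).1) && ((val q).2 \subset (val p).2)).
Lemma sp_adj_sym : symmetric sp_adj.
Proof. by move=> p q; rewrite /sp_adj eq_sym orbC. Qed.
Lemma sp_adj_irr : irreflexive sp_adj.
Proof. by move=> p; rewrite /sp_adj eqxx. Qed.
Definition simplex_prod : graph := Graph sp_adj_sym sp_adj_irr.
End SimplexProd.

(* Main.v *)
Require Import Defs.
From mathcomp Require Import all_boot.
From Stdlib Require Import Relations.Relation_Operators.
From mathcomp Require Import zify.
Set Implicit Arguments. Unset Strict Implicit. Unset Printing Implicit Defensive.

Lemma card_induced (G : graph) (A : {set vert G}) : #|vert (induced A)| = #|A|.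
Proof. by rewrite /= /ind_vert card_sig; apply: eq_card => x. Qed.

Lemma card_lt_notin (T : finType) (A : {set T}) u : u \notin A -> #|A| < #|T|.
Proof.
move=> Hu; rewrite -cardsT; apply: proper_card; rewrite properT.
by apply: contraNneq Hu => ->; rewrite inE.
Qed.

Lemma cone_contr n : forall (G : graph) (x0 : vert G), #|vert G| <= n ->
  (forall y, y != x0 -> adj x0 y) -> contractible G.
Proof.
elim: n => [|n IH] G x0 Hc Hx.
  by rewrite leqn0 in Hc; move: (card0_eq (eqP Hc) x0); rewrite !inE.
case: (boolP [exists u, u != x0]).
  case/existsP=> u Hu.
  have Hux : adj u x0 by rewrite adj_sym Hx.
  apply: (@contr_step _ u).
    have Hx0 : x0 \in nbhd u by rewrite inE.
    apply: (IH (unit_sphere u) (exist _ x0 Hx0 : vert (unit_sphere u))).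
      rewrite card_induced -ltnS (leq_trans _ Hc) //.
      by apply: (@card_lt_notin _ _ u); rewrite inE adj_irr.
    move=> y Hy; rewrite /= /ind_adj /=; apply: Hx.
    by apply: contraNneq Hy => Hyx; apply/eqP/val_inj.
  have Hx0 : x0 \in [set~ u] by rewrite !inE eq_sym.
  apply: (IH (del_vertex u) (exist _ x0 Hx0 : vert (del_vertex u))).
    rewrite card_induced -ltnS (leq_trans _ Hc) //.
    by apply: (@card_lt_notin _ _ u); rewrite !inE eqxx.
  move=> y Hy; rewrite /= /ind_adj /=; apply: Hx.
  by apply: contraNneq Hy => Hyx; apply/eqP/val_inj.
move/existsPn=> Hn; apply: contr_K1.
rewrite -(cards1 x0); apply: eq_card => y; rewrite !inE.
by move: (Hn y); rewrite negbK => ->.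
Qed.

Definition embeds (G K : graph) (f : vert G -> vert K) :=
  injective f /\ forall a b, adj (f a) (f b) = adj a b.

Lemma iso_of_embeds (G T K : graph) (f : vert G -> vert K) (g : vert T -> vert K) :
  embeds f -> embeds g -> (forall v, (exists a, f a = v) <-> (exists t, g t = v)) ->
  graph_iso G T.
Proof.
move=> [fi fa] [gi ga] Him.
have ex1 : forall a, exists t, g t == f a.
  by move=> a; case: (Him (f a)).1; [exists a | move=> t <-; exists t].
have ex2 : forall t, exists a, f a == g t.
  by move=> t; case: (Him (g t)).2; [exists t | move=> a <-; exists a].
pose h a := xchoose (ex1 a); pose k t := xchoose (ex2 t).
have Hh a : g (h a) = f a by apply/eqP/(xchooseP (ex1 a)).
have Hk t : f (k t) = g t by apply/eqP/(xchooseP (ex2 t)).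
exists h; split.
  exists k => [a|t]; [apply: fi | apply: gi]; by rewrite ?Hk ?Hh.
by move=> a b; rewrite -ga !Hh fa.
Qed.

Section Removal.
Variable K : graph.
Variable W : {set vert K}.

Definition NW (S : {set vert K}) : {set vert K} :=
  [set w in W | [forall s in S, adj s w]].

Definition clique (S : {set vert K}) :=
  forall u v, u \in S -> v \in S -> u != v -> adj u v.

Definition cone_hyp := forall S : {set vert K}, S != set0 ->
  (forall s, s \in S -> s \notin W) -> clique S ->
  exists2 w, w \in NW S & forall w', w' \in NW S -> w' != w -> adj w w'.

Hypothesis Hcone : cone_hyp.

Lemma sphere_img (G : graph) (f : vert G -> vert K) (x : vert G) v :
  embeds f ->
  (exists y : vert (unit_sphere x), f (val y) = v) <->
  ((exists y, f y = v) /\ adj (f x) v).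
Proof.
move=> [fi fa]; split.
  by case=> y <-; split; [exists (val y) | rewrite fa; case: y => /= y; rewrite inE].
case=> [[y <-]]; rewrite fa => Hxy.
have Hy : y \in nbhd x by rewrite inE.
by exists (exist _ y Hy).
Qed.

Lemma del_img (G : graph) (f : vert G -> vert K) (x : vert G) v :
  embeds f ->
  (exists y : vert (del_vertex x), f (val y) = v) <->
  ((exists y, f y = v) /\ v != f x).
Proof.
move=> [fi fa]; split.
  case=> y <-; split; first by exists (val y).
  by rewrite (inj_eq fi); case: y => /= y; rewrite !inE.
case=> [[y <-]]; rewrite (inj_eq fi) => Hxy.
have Hy : y \in [set~ x] by rewrite !inE.
by exists (exist _ y Hy).
Qed.

Lemma embeds_sphere (G : graph) (f : vert G -> vert K) (x : vert G) :
  embeds f -> embeds (fun y : vert (unit_sphere x) => f (val y)).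
Proof. by move=> [fi fa]; split; [move=> a b /fi /val_inj | move=> a b; rewrite fa]. Qed.

Lemma embeds_del (G : graph) (f : vert G -> vert K) (x : vert G) :
  embeds f -> embeds (fun y : vert (del_vertex x) => f (val y)).
Proof. by move=> [fi fa]; split; [move=> a b /fi /val_inj | move=> a b; rewrite fa]. Qed.

Lemma L_contr n : forall (G : graph) (f : vert G -> vert K) (S Q : {set vert K}),
  embeds f -> #|Q| <= n -> S != set0 ->
  (forall s, s \in S -> s \notin W) -> clique S ->
  (forall q, q \in Q -> q \notin W) ->
  (forall q s, q \in Q -> s \in S -> adj s q) ->
  (forall v, (exists a, f a = v) <-> v \in NW S :|: Q) ->
  contractible G.
Proof.
elim: n => [|n IH] G f S Q Hf HQ HS0 HSW HSc HQW HQS Him.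
  move: HQ; rewrite leqn0 cards_eq0 => /eqP HQ; subst Q.
  have [w Hw Hwc] := Hcone HS0 HSW HSc.
  have [x0 Hx0] : exists x0, f x0 = w by apply/Him; rewrite setU0.
  apply: (@cone_contr #|vert G| _ x0) => // y Hy.
  rewrite -(proj2 Hf) Hx0; apply: Hwc.
    by move: (Him (f y)).1; rewrite setU0; apply; exists y.
  by rewrite -Hx0 (inj_eq (proj1 Hf)).
case: (set_0Vmem Q) => [HQ0|[q Hq]].
  by apply: (IH G f S Q) => //; rewrite HQ0 cards0.
have [x Hx] : exists x, f x = q by apply/Him; rewrite inE Hq orbT.
apply: (@contr_step _ x).
  apply: (IH _ _ (q |: S) (Q :&: [set v | adj q v]) (embeds_sphere x Hf)).
  - rewrite -ltnS (leq_trans _ HQ) //; apply: proper_card.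
    rewrite properE subsetIl; apply/subsetPn; exists q => //.
    by rewrite !inE adj_irr andbF.
  - by apply/set0Pn; exists q; rewrite !inE eqxx.
  - by move=> s; rewrite !inE => /orP[/eqP->|]; [apply: HQW | apply: HSW].
  - move=> u v; rewrite !inE => /orP[/eqP->|Hu] /orP[/eqP->|Hv].
    + by rewrite eqxx.
    + by move=> _; rewrite adj_sym; apply: HQS.
    + by move=> _; apply: HQS.
    + by apply: HSc.
  - by move=> v; rewrite inE => /andP[/HQW].
  - move=> v s; rewrite !inE => /andP[Hv Hqv] /orP[/eqP->//|Hs]; exact: HQS.
  - move=> v; apply: (iff_trans (sphere_img x v Hf)); rewrite Hx.
    apply: (iff_trans (and_iff_compat_r _ (Him v))); rewrite !inE.
    split.
      case=> /orP[/andP[HvW /forallP Hall] Hqv|HvQ Hqv]; apply/orP; [left|right].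
        rewrite HvW /=; apply/forallP => s; apply/implyP; rewrite inE.
        by case/orP=> [/set1P->//|Hs]; move/implyP: (Hall s); apply.
      by rewrite HvQ.
    case/orP=> [/andP[HvW /forallP Hall]|/andP[HvQ Hqv]]; last by rewrite HvQ orbT.
    have Hqv : adj q v by move/implyP: (Hall q); apply; rewrite !inE eqxx.
    split=> //; apply/orP; left; rewrite HvW /=; apply/forallP=> s.
    by apply/implyP=> Hs; move/implyP: (Hall s); apply; rewrite !inE Hs orbT.
apply: (IH _ _ S (Q :\ q) (embeds_del x Hf)) => //.
- by rewrite -ltnS (leq_trans _ HQ) // (cardsD1 q Q) Hq.
- by move=> v; rewrite inE => /andP[_ /HQW].
- by move=> v s; rewrite inE => /andP[_ Hv]; apply: HQS.
- move=> v; apply: (iff_trans (del_img x v Hf)); rewrite Hx.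
  apply: (iff_trans (and_iff_compat_r _ (Him v))); rewrite !inE; split.
    case=> /orP[->//|HvQ] Hvq; by rewrite HvQ Hvq orbT.
  case/orP=> [Hv|/andP[Hvq HvQ]]; last by rewrite HvQ orbT.
  split; first by rewrite Hv.
  by move/andP: Hv => [HvW _]; apply: contraTneq HvW => ->; apply: HQW.
Qed.
End Removal.

Section Removal2.
Variable K : graph.
Variable W : {set vert K}.
Hypothesis Hcone : cone_hyp W.

Lemma M_hom (T : graph) (g : vert T -> vert K) n :
  embeds g -> (forall v, (exists t, g t = v) <-> v \in W) ->
  forall (G : graph) (f : vert G -> vert K) (Q : {set vert K}),
  embeds f -> #|Q| <= n -> (forall q, q \in Q -> q \notin W) ->
  (forall v, (exists a, f a = v) <-> v \in W :|: Q) -> homotopic G T.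
Proof.
move=> Hg Himg; elim: n => [|n IH] G f Q Hf HQ HQW Him.
  move: HQ; rewrite leqn0 cards_eq0 => /eqP HQ; subst Q.
  apply: rst_step; apply: hs_iso; apply: (iso_of_embeds Hf Hg) => v.
  by apply: (iff_trans (Him v)); rewrite setU0; apply: iff_sym.
case: (set_0Vmem Q) => [HQ0|[q Hq]].
  by apply: (IH G f Q) => //; rewrite HQ0 cards0.
have [x Hx] : exists x, f x = q by apply/Him; rewrite inE Hq orbT.
apply: (@rst_trans _ _ _ (del_vertex x)).
  apply: rst_step; apply: hs_remove.
  apply: (@L_contr K W Hcone #|Q| _ _ [set q] (Q :&: [set v | adj q v]) (embeds_sphere x Hf)).
  - by apply: subset_leq_card; apply: subsetIl.
  - by apply/set0Pn; exists q; rewrite !inE.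
  - by move=> s /set1P->; apply: HQW.
  - by move=> u v /set1P-> /set1P->; rewrite eqxx.
  - by move=> v; rewrite inE => /andP[/HQW].
  - by move=> v s; rewrite !inE => /andP[_ Hqv] /eqP->.
  - move=> v; apply: (iff_trans (sphere_img x v Hf)); rewrite Hx.
    apply: (iff_trans (and_iff_compat_r _ (Him v))); rewrite !inE.
    split.
      case=> /orP[HvW|HvQ] Hqv; apply/orP; [left|right]; last by rewrite HvQ.
      by rewrite HvW /=; apply/forallP => s; apply/implyP => /set1P->.
    case/orP=> [/andP[HvW /forallP Hall]|/andP[HvQ Hqv]]; last by rewrite HvQ orbT.
    by split; [rewrite HvW | move/implyP: (Hall q); apply; rewrite inE].
apply: (IH _ _ (Q :\ q) (embeds_del x Hf)) => //.
- by rewrite -ltnS (leq_trans _ HQ) // (cardsD1 q Q) Hq.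
- by move=> v; rewrite inE => /andP[_ /HQW].
- move=> v; apply: (iff_trans (del_img x v Hf)); rewrite Hx.
  apply: (iff_trans (and_iff_compat_r _ (Him v))); rewrite !inE; split.
    case=> /orP[->//|HvQ] Hvq; by rewrite HvQ Hvq orbT.
  case/orP=> [Hv|/andP[Hvq HvQ]]; last by rewrite HvQ orbT.
  split; first by rewrite Hv.
  by apply: contraTneq Hv => ->; apply: HQW.
Qed.
End Removal2.

Lemma simplex_adj (G : graph) (A : {set vert G}) x y :
  simplex A -> x \in A -> y \in A -> x != y -> adj x y.
Proof.
case/andP=> _ /forallP Hall Hx Hy Hxy.
by move/implyP: (Hall x) => /(_ Hx) /forallP /(_ y) /implyP /(_ Hy) /implyP; apply.
Qed.

Section Combined.
Variables G H : graph.

Definition KV : finType := ((vert G * vert H) + sp_vert G H)%type.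

Definition Kadj : rel KV := fun u v =>
  match u, v with
  | inl p, inl q => strong_adj p q
  | inr c, inr d => sp_adj c d
  | inl p, inr c => (p.1 \in (val c).1) && (p.2 \in (val c).2)
  | inr c, inl p => (p.1 \in (val c).1) && (p.2 \in (val c).2)
  end.

Lemma Kadj_sym : symmetric Kadj.
Proof.
case=> [p|c] [q|d]; rewrite /Kadj //.
  exact: strong_adj_sym.
exact: sp_adj_sym.
Qed.
Lemma Kadj_irr : irreflexive Kadj.
Proof.
case=> [p|c]; rewrite /Kadj; [exact: strong_adj_irr | exact: sp_adj_irr].
Qed.
Definition Kg : graph := Graph Kadj_sym Kadj_irr.

Definition isl (v : KV) := if v is inl _ then true else false.
Definition Wl : {set vert Kg} := [set v | isl v].

Lemma strong_adj1 (p q : vert G * vert H) :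
  strong_adj p q -> p.1 != q.1 -> adj p.1 q.1.
Proof.
case/andP=> _ /or3P[/andP[/eqP-> _]|/andP[_ ->]|/andP[-> _]] //.
by rewrite eqxx.
Qed.

Lemma strong_adj2 (p q : vert G * vert H) :
  strong_adj p q -> p.2 != q.2 -> adj p.2 q.2.
Proof.
case/andP=> _ /or3P[/andP[_ ->]|/andP[/eqP-> _]|/andP[_ ->]] //.
by rewrite eqxx.
Qed.

Lemma cone_cells : cone_hyp (~: Wl).
Proof.
move=> S HS0 HSW HSc.
pose A1 := [set a | [exists b, (inl (a, b) : vert Kg) \in S]].
pose A2 := [set b | [exists a, (inl (a, b) : vert Kg) \in S]].
have HSl : forall s, s \in S -> exists a b, s = inl (a, b).
  move=> [[a b]|c] Hs; first by exists a, b.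
  by move: (HSW _ Hs); rewrite !inE.
have [s0 Hs0] := set0Pn _ HS0.
have [a0 [b0 Hab0]] := HSl _ Hs0; subst s0.
have HA : simplex A1 && simplex A2.
  apply/andP; split; apply/andP; split.
  - by apply/set0Pn; exists a0; rewrite inE; apply/existsP; exists b0.
  - apply/forallP=> x; apply/implyP; rewrite inE => /existsP[b Hb].
    apply/forallP=> y; apply/implyP; rewrite inE => /existsP[b' Hb'].
    apply/implyP=> Hxy.
    have Hne : (inl (x, b) : vert Kg) != inl (y, b').
      by apply: contra Hxy => /eqP [-> _].
    exact: (strong_adj1 (HSc _ _ Hb Hb' Hne)).
  - by apply/set0Pn; exists b0; rewrite inE; apply/existsP; exists a0.
  - apply/forallP=> x; apply/implyP; rewrite inE => /existsP[a Ha].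
    apply/forallP=> y; apply/implyP; rewrite inE => /existsP[a' Ha'].
    apply/implyP=> Hxy.
    have Hne : (inl (a, x) : vert Kg) != inl (a', y).
      by apply: contra Hxy => /eqP [_ ->].
    exact: (strong_adj2 (HSc _ _ Ha Ha' Hne)).
pose c0 : sp_vert G H := exist _ (A1, A2) HA.
have Hc0 : (inr c0 : vert Kg) \in NW (~: Wl) S.
  rewrite inE; apply/andP; split; first by rewrite !inE.
  apply/forallP=> s; apply/implyP=> Hs.
  have [a [b Hab]] := HSl _ Hs; subst s.
  by apply/andP; split; rewrite /= inE; apply/existsP; [exists b | exists a].
exists (inr c0) => // w'; rewrite inE => /andP[].
case: w' => [p|c]; first by rewrite !inE.
move=> _ /forallP Hall Hne.
rewrite /= /sp_adj; apply/andP; split.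
  by apply: contra Hne => /eqP->.
apply/orP; left; apply/andP; split; apply/subsetP=> x; rewrite inE => /existsP[y Hy].
  by move: (Hall (inl (x, y))) => /implyP /(_ Hy) /andP[].
by move: (Hall (inl (y, x))) => /implyP /(_ Hy) /andP[].
Qed.
Definition wt (v : KV) : nat :=
  if v is inr c then #|(val c).1| + #|(val c).2| else 0.

Lemma cone_points : cone_hyp Wl.
Proof.
move=> S HS0 HSW HSc.
have HSr : forall s, s \in S -> exists c, s = inr c.
  move=> [p|c] Hs; last by exists c.
  by move: (HSW _ Hs); rewrite !inE.
have [s0 Hs0] := set0Pn _ HS0.
case: (@arg_minnP _ s0 (fun v => v \in S) wt Hs0) => v Hv Hmin.
have [c Hc] := HSr _ Hv; subst v.
have Hsub : forall d, (inr d : vert Kg) \in S ->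
    ((val c).1 \subset (val d).1) && ((val c).2 \subset (val d).2).
  move=> d Hd; case: (eqVneq c d) => [->|Hcd]; first by rewrite !subxx.
  have Hne : (inr c : vert Kg) != inr d by apply: contra Hcd => /eqP [->].
  move: (HSc _ _ Hv Hd Hne); rewrite /= /sp_adj => /andP[_ /orP[//|/andP[H1 H2]]].
  have Hw : #|(val c).1| + #|(val c).2| <= #|(val d).1| + #|(val d).2| := Hmin _ Hd.
  have E1 : (val d).1 == (val c).1.
    rewrite eqEcard H1 /= -(leq_add2r #|(val c).2|); apply: leq_trans Hw _.
    by rewrite leq_add2l subset_leq_card.
  have E2 : (val d).2 == (val c).2.
    rewrite eqEcard H2 /= -(leq_add2l #|(val c).1|); apply: leq_trans Hw _.
    by rewrite leq_add2r subset_leq_card.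
  by rewrite (eqP E1) (eqP E2) !subxx.
have [Hc1 Hc2] : simplex (val c).1 /\ simplex (val c).2.
  by case: c {Hv Hmin Hsub} => [[c1 c2] /= /andP[]].
have [a Ha] := set0Pn _ (proj1 (andP Hc1)).
have [b Hb] := set0Pn _ (proj1 (andP Hc2)).
have Hw : (inl (a, b) : vert Kg) \in NW Wl S.
  rewrite inE; apply/andP; split; first by rewrite !inE.
  apply/forallP=> s; apply/implyP=> Hs.
  have [d Hd] := HSr _ Hs; subst s.
  case/andP: (Hsub _ Hs) => /subsetP S1 /subsetP S2.
  by rewrite /= (S1 _ Ha) (S2 _ Hb).
exists (inl (a, b)) => // w'; rewrite inE => /andP[].
case: w' => [[a' b']|d]; last by rewrite !inE.
move=> _ /forallP Hall Hne.
have /andP[Ha' Hb'] : (a' \in (val c).1) && (b' \in (val c).2).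
  by move: (Hall (inr c)) => /implyP /(_ Hv).
rewrite /= /strong_adj /=; apply/andP; split; first by rewrite eq_sym.
case: (eqVneq a a') => [Eaa|Naa].
  subst a'; have Nbb : b != b'.
    by apply: contra Hne => /eqP->.
  by rewrite (simplex_adj Hc2 Hb Hb' Nbb).
rewrite (simplex_adj Hc1 Ha Ha' Naa) /=.
case: (eqVneq b b') => [->|Nbb]; first by rewrite ?eqxx.
by rewrite (simplex_adj Hc2 Hb Hb' Nbb) !orbT.
Qed.
End Combined.

Theorem mainTheorem2 (G H : graph) :
  homotopic (strong_prod G H) (simplex_prod G H).
Proof.
have Hid : embeds (id : vert (Kg G H) -> vert (Kg G H)) by split.
have Hl : embeds (inl : vert (strong_prod G H) -> vert (Kg G H)).
  by split; [exact: inl_inj | by []].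
have Hr : embeds (inr : vert (simplex_prod G H) -> vert (Kg G H)).
  by split; [exact: inr_inj | by []].
apply: (@rst_trans _ _ _ (Kg G H)).
  apply: rst_sym.
  apply: (@M_hom _ _ (@cone_points G H) _ _ #|~: Wl G H| Hl _ _ id (~: Wl G H) Hid) => //.
  - by move=> v; split; [case=> t <-; rewrite inE | case: v => [p|c]; rewrite inE //= => _; exists p].
  - by move=> q; rewrite inE.
  - by move=> v; split=> [_|]; [rewrite setUCr inE | exists v].
apply: (@M_hom _ _ (@cone_cells G H) _ _ #|Wl G H| Hr _ _ id (Wl G H) Hid) => //.
- by move=> v; split; [case=> t <-; rewrite !inE | case: v => [p|c]; rewrite !inE //= => _; exists c].
- by move=> q; rewrite !inE negbK.
- by move=> v; split=> [_|]; [rewrite setUC setUCr inE | exists v].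
Qed.
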